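(* There is an absolute constant $C$ such that for every countable $X$, $f:X^n\to\{0,1\}$, $\varepsilon,\eta\in(0,1)$, distribution $\mathcal D$ on $X$, and integer $m\ge Cn^2/\varepsilon^2$, setting $f'=f\circ\Phi_{m\to n}$, $$\big|\mathrm{AdaptiveAddMax}_\eta(f',\mathcal D)-\mathrm{BinomialMax}_\eta(f',\mathcal D)\big|\le\varepsilon.$$
   Context: $\Phi_{m\to n}$ outputs the entries of its input $S\in X^m$ at a uniformly random sequence of $n$ distinct indices. For $S\in X^{\lceil(1-\eta)m\rceil}$, $\mathrm{add}_\eta(S)$ is the set of samples in $X^m$ obtained by adding $\lfloor\eta m\rfloor$ arbitrary points to $S$ and arbitrarily permuting; $\mathrm{AdaptiveAddMax}_\eta(g,\mathcal D)=\mathbb E_{S\sim\mathcal D^{\lceil(1-\eta)m\rceil}}[\sup_{S'\in\mathrm{add}_\eta(S)}\mathbb E[g(S')]]$ for randomized $g:X^m\to\{0,1\}$. For a sample $S$ with $|S|\le m$, $\mathrm{complete}_m(S)$ is the set of samples in $X^m$ obtained by adding $m-|S|$ arbitrary points to $S$ and arbitrarily permuting; $\mathrm{BinomialMax}_\eta(g,\mathcal D)=\mathbb E_{z\sim\mathrm{Bin}(m,1-\eta)}\mathbb E_{S\sim\mathcal D^{z}}[\sup_{S'\in\mathrm{complete}_m(S)}\mathbb E[g(S')]]$. *)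

(* Defs.v *)
From HB Require Import structures.
From mathcomp Require Import all_boot all_order all_algebra.
From mathcomp Require Import all_classical all_reals all_analysis.
Set Implicit Arguments. Unset Strict Implicit. Unset Printing Implicit Defensive.
Import Order.TTheory GRing.Theory Num.Theory.
Local Open Scope classical_set_scope.
Local Open Scope ring_scope.

Section Defs.
Variable R : realType.
Variable X : countType.

Definition is_distribution (p : X -> R) : Prop :=
  (forall x, 0 <= p x) /\ (\esum_(x in [set: X]) (p x)%:E = 1)%E.

Definition prod_weight (p : X -> R) (k : nat) (S : k.-tuple X) : R :=
  \prod_(i < k) p (tnth S i).

Definition expect_iid (p : X -> R) (k : nat) (h : k.-tuple X -> \bar R) : \bar R :=
  (\esum_(S in [set: k.-tuple X]) ((prod_weight p S)%:E * h S))%E.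

(* Phi_{m -> n}: a uniformly random sequence of n distinct indices of [m],
   i.e. a uniformly random injection 'I_n -> 'I_m.  For a deterministic
   f : X^n -> {0,1}, phi_compose f S = E[(f o Phi_{m->n})(S)] = Pr[f'(S) = 1]. *)
Definition phi_compose (n m : nat) (f : n.-tuple X -> bool) (S : m.-tuple X) : R :=
  (#|[set s : {ffun 'I_n -> 'I_m} | injectiveb s]|%:R)^-1 *
  \sum_(s : {ffun 'I_n -> 'I_m} | injectiveb s)
     (f [tuple tnth S (s i) | i < n] : nat)%:R.

Definition n_added (eta : R) (m : nat) : nat := Num.truncn (eta * m%:R).
Definition n_clean (eta : R) (m : nat) : nat := `|Num.ceil ((1 - eta) * m%:R)|%N.

Definition add_pts (eta : R) (m : nat) (S : seq X) : set (m.-tuple X) :=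
  [set S' | exists T : seq X, size T = n_added eta m /\ perm_eq S' (S ++ T)].

Definition complete (m : nat) (S : seq X) : set (m.-tuple X) :=
  [set S' | exists T : seq X, size T = (m - size S)%N /\ perm_eq S' (S ++ T)].

(* A randomized g : X^m -> {0,1} is represented by gE S = E[g(S)] in [0,1]. *)
Definition AdaptiveAddMax (eta : R) (m : nat) (gE : m.-tuple X -> R) (p : X -> R)
  : \bar R :=
  expect_iid p (fun S : (n_clean eta m).-tuple X =>
    ereal_sup [set (gE S')%:E | S' in @add_pts eta m S]).

Definition BinomialMax (eta : R) (m : nat) (gE : m.-tuple X -> R) (p : X -> R)
  : \bar R :=
  (\sum_(z < m.+1)
     (('C(m, z))%:R * (1 - eta) ^+ z * eta ^+ (m - z))%:E *
     expect_iid p (fun S : z.-tuple X =>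
       ereal_sup [set (gE S')%:E | S' in @complete m S]))%E.

End Defs.

(* Main.v *)
Require Import Defs.
From HB Require Import structures.
From mathcomp Require Import all_boot all_order all_algebra.
From mathcomp Require Import all_classical all_reals all_analysis.
From mathcomp Require Import perm ring lra zify.
Set Implicit Arguments. Unset Strict Implicit. Unset Printing Implicit Defensive.
Import Order.TTheory GRing.Theory Num.Theory.



Definition Ninj (n m : nat) := (\sum_(s : {ffun 'I_n -> 'I_m} | injectiveb s) 1)%N.



Lemma sum_lt_ord m' (d : nat) : (d <= m')%N ->
  (\sum_(k < m') (k < d))%N = d.
Proof.
move=> le; rewrite -(big_mkord (fun _ => true) (fun k => nat_of_bool (k < d)%N)).
rewrite (big_cat_nat (n := d)) //=.
rewrite big_nat_cond (eq_bigr (fun _ => 1%N)); last first.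
  by move=> i /andP[/andP[_ ->]].
rewrite -big_nat_cond sum_nat_const_nat muln1 subn0.
rewrite big_nat_cond big1 ?addn0 //.
by move=> i /andP[/andP[/leq_gtF -> _]].
Qed.

Lemma count_hits n m (i : 'I_n) d : (d <= m)%N ->
  (m * \sum_(s : {ffun 'I_n -> 'I_m} | injectiveb s) (s i < d))%N = (d * Ninj n m)%N.
Proof.
case: m => [|m'] le.
  by move: le; rewrite leqn0 => /eqP ->; rewrite mul0n.
pose sh (k : 'I_m'.+1) (s : {ffun 'I_n -> 'I_m'.+1}) := [ffun x => ((s x + k)%R : 'I_m'.+1)].
have shI k : injective (sh k).
  move=> s1 s2 /ffunP e; apply/ffunP => x; move: (e x); rewrite !ffunE.
  exact: addIr.
have shinj k s : injectiveb (sh k s) = injectiveb s.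
  apply/injectiveP/injectiveP => H x y e.
    by apply: H; rewrite !ffunE e.
  by move: e; rewrite !ffunE => /(addIr k) /H.
have step (k : 'I_m'.+1) : (\sum_(s : {ffun 'I_n -> 'I_m'.+1} | injectiveb s) (s i < d))%N =
              (\sum_(s : {ffun 'I_n -> 'I_m'.+1} | injectiveb s) (((s i + k)%R : 'I_m'.+1) < d))%N.
  rewrite (reindex_inj (shI k)) /=.
  by apply: eq_big => s; [exact: shinj | rewrite ffunE].
rewrite -[X in (X * _)%N]card_ord -sum_nat_const.
rewrite (eq_bigr (fun k : 'I_m'.+1 => \sum_(s : {ffun 'I_n -> 'I_m'.+1} | injectiveb s) (((s i + k)%R : 'I_m'.+1) < d))%N); last first.
  by move=> k _; exact: step.
rewrite exchange_big.
transitivity (\sum_(s : {ffun 'I_n -> 'I_m'.+1} | injectiveb s) d)%N; last first.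
  by rewrite /Ninj big_distrr /=; apply: eq_bigr => s _; rewrite muln1.
apply: eq_bigr => s _.
transitivity (\sum_(k < m'.+1) (k < d))%N; last exact: sum_lt_ord.
rewrite [RHS](reindex_inj (addrI (s i))).
by apply: eq_bigl.
Qed.


Section G.
Variables (R : realType) (X : countType) (n m : nat) (f : n.-tuple X -> bool).
Local Notation gE := (@phi_compose R X n m f).

Definition SA (A : m.-tuple X) : nat :=
  \sum_(s : {ffun 'I_n -> 'I_m} | injectiveb s) (f [tuple tnth A (s i) | i < n] : nat).

Lemma card_inj_cls :
  #|[set s : {ffun 'I_n -> 'I_m} | injectiveb s]%classic| = Ninj n m.
Proof.
rewrite /Ninj -sum1_card; apply: eq_bigl => s.
by apply/idP/idP; rewrite in_setE.
Qed.

Lemma gE_SA A : gE A = ((Ninj n m)%:R^-1 * (SA A)%:R)%R.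
Proof. by rewrite /phi_compose card_inj_cls /SA !natr_sum. Qed.

Lemma SA_le A : (SA A <= Ninj n m)%N.
Proof. by apply: leq_sum => s _; case: f. Qed.

Lemma gE_ge0 A : (0 <= gE A)%R.
Proof. by rewrite gE_SA mulr_ge0 // invr_ge0. Qed.

Lemma gE_le1 A : (gE A <= 1)%R.
Proof.
rewrite gE_SA; have [->|N0] := eqVneq (Ninj n m) 0%N; first by rewrite invr0 mul0r.
rewrite ler_pdivrMl ?ltr0n ?lt0n // mulr1 ler_nat; exact: SA_le.
Qed.

Lemma SA_perm (A B : m.-tuple X) : perm_eq A B -> SA A = SA B.
Proof.
case/tuple_permP => sg eA.
pose h (s : {ffun 'I_n -> 'I_m}) := [ffun i => sg (s i)].
have hI : injective h.
  move=> s1 s2 /ffunP e; apply/ffunP => x; move: (e x); rewrite !ffunE.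
  exact: perm_inj.
rewrite /SA [RHS](reindex_inj hI); apply: eq_big => s.
  apply/injectiveP/injectiveP => H x y e.
    by move: e; rewrite !ffunE => /perm_inj /H.
  by apply: H; rewrite !ffunE e.
move=> _; congr (nat_of_bool (f _)); apply: eq_from_tnth => i.
rewrite !tnth_map !tnth_ord_tuple ffunE.
have eA' : A = [tuple tnth B (sg i) | i < m] by apply: val_inj.
by rewrite eA' tnth_map tnth_ord_tuple.
Qed.

Lemma gE_perm (A B : m.-tuple X) : perm_eq A B -> gE A = gE B.
Proof. by move=> /SA_perm e; rewrite !gE_SA e. Qed.

Lemma SA_pos (A B : m.-tuple X) d : (d <= m)%N ->
  (forall i : 'I_m, (d <= i)%N -> tnth A i = tnth B i) ->
  (m * SA A <= m * SA B + n * (d * Ninj n m))%N.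
Proof.
move=> dm eAB.
have h1 : (SA A <= SA B + \sum_(s : {ffun 'I_n -> 'I_m} | injectiveb s)
                 \sum_(i < n) (s i < d))%N.
  rewrite /SA -big_split /=; apply: leq_sum => s _.
  case: (boolP [exists i, s i < d]) => [/existsP [i0 hi0]|].
    rewrite (bigD1 i0) //= hi0.
    by case: (f _) => //; case: (f _) => //=; rewrite addnC ltnS ?leq_addl // add0n.
  rewrite negb_exists => /forallP hall.
  suff -> : [tuple tnth A (s i) | i < n] = [tuple tnth B (s i) | i < n] by rewrite leq_addr.
  apply: eq_from_tnth => i; rewrite !tnth_map !tnth_ord_tuple.
  by apply: eAB; rewrite leqNgt hall.
rewrite exchange_big /= in h1.
have h2 : (m * \sum_(i < n) \sum_(s : {ffun 'I_n -> 'I_m} | injectiveb s) (s i < d)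
          = n * (d * Ninj n m))%N.
  rewrite big_distrr /= (eq_bigr (fun _ => (d * Ninj n m)%N)).
    by rewrite sum_nat_const card_ord.
  by move=> i _; rewrite count_hits.
rewrite -h2 -mulnDr leq_mul2l h1 orbT //.
Qed.

Local Open Scope ring_scope.
Lemma gE_pos (A B : m.-tuple X) d : (d <= m)%N ->
  (forall i : 'I_m, (d <= i)%N -> tnth A i = tnth B i) ->
  (gE A <= gE B + n%:R * d%:R / m%:R)%R.
Proof.
move=> dm eAB; have H := SA_pos dm eAB.
case: (posnP d) => [d0|dpos].
  suff -> : A = B by rewrite d0 mulr0 mul0r addr0.
  by apply: eq_from_tnth => i; apply: eAB; rewrite d0.
have mpos : (0 < m)%N by apply: leq_trans dm.
rewrite !gE_SA; have [->|N0] := eqVneq (Ninj n m) 0%N.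
  by rewrite invr0 !mul0r add0r divr_ge0 // mulr_ge0.
have Npos : (0 : R) < (Ninj n m)%:R by rewrite ltr0n lt0n.
have mposR : (0 : R) < m%:R by rewrite ltr0n.
rewrite -(ler_pM2l Npos) mulrDr !mulrA mulfV ?gt_eqF // !mul1r.
rewrite -(ler_pM2l mposR) mulrDr.
have -> : m%:R * ((Ninj n m)%:R * n%:R * d%:R / m%:R) = n%:R * (d%:R * (Ninj n m)%:R) :> R.
  by field; rewrite gt_eqF.
by rewrite -!natrM -natrD ler_nat.
Qed.
End G.

Local Open Scope classical_set_scope.
Local Open Scope ring_scope.


Section Esum.
Variable R : realType.

Lemma esumZr (T : choiceType) (I : set T) (r : R) (a : T -> \bar R) :
  (0 <= r) -> (forall x, (0 <= a x)%E) ->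
  (\esum_(x in I) (r%:E * a x) = r%:E * \esum_(x in I) a x)%E.
Proof.
move=> r0 a0; rewrite /esum -ereal_supZl //; last first.
  by apply/set0P; exists 0%E; exists set0; [exact: fsets_set0|rewrite fsbig_set0].
congr ereal_sup; apply/seteqP; split=> y /=.
  by case=> A HA <-; exists (\sum_(x \in A) a x)%E; [exists A|rewrite ge0_mule_fsumr].
by case=> _ [A HA <-] <-; exists A => //; rewrite ge0_mule_fsumr.
Qed.
End Esum.



Section Marg.
Variables (R : realType) (X : countType) (p : X -> R).
Hypothesis hp : is_distribution p.

Lemma prod_weight_ge0 k (S : k.-tuple X) : 0 <= prod_weight p S.
Proof. by apply: prodr_ge0 => i _; case: hp. Qed.

Lemma prod_weight_cons k x (t : k.-tuple X) :
  prod_weight p [tuple of x :: t] = p x * prod_weight p t.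
Proof.
rewrite /prod_weight big_ord_recl tnth0; congr (_ * _).
by apply: eq_bigr => i _; rewrite tnthS.
Qed.

Definition E k (h : k.-tuple X -> R) := expect_iid p (fun S => (h S)%:E).

Lemma E_behead k (h : k.-tuple X -> R) : (forall S, 0 <= h S) ->
  E (fun S : k.+1.-tuple X => h [tuple of behead S]) = E h.
Proof.
move=> h0; rewrite /E /expect_iid.
rewrite (reindex_esum (setT `*`` (fun _ => setT)) _
   (fun xt : k.-tuple X * X => [tuple of xt.2 :: xt.1])); last first.
  split.
  - by move=> xt _.
  - move=> [t1 x1] [t2 x2] _ _ /= /(congr1 val) /= [-> /val_inj ->] //.
  - move=> S _; exists (behead_tuple S, thead S) => //=.
    by rewrite [RHS]tuple_eta.
rewrite -(@esum_esum _ _ _ setT (fun _ => setT) (fun (t : k.-tuple X) (x : X) =>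
   ((prod_weight p [tuple of x :: t])%:E *
     (h (behead_tuple [tuple of x :: t]))%:E)%E)); last first.
  by move=> t x _ _; rewrite -EFinM lee_fin mulr_ge0 // prod_weight_ge0.
apply: eq_esum => t _.
have bh (x : X) : behead_tuple [tuple of x :: t] = t by apply: val_inj.
rewrite (eq_esum (b := fun x => ((prod_weight p t * h t)%:E * (p x)%:E)%E)); last first.
  by move=> x _; rewrite bh prod_weight_cons -!EFinM; congr (_%:E); rewrite [RHS]mulrC mulrA.
rewrite (@esumZr _ _ _ _ (fun x => (p x)%:E)).
- by case: hp => _ ->; rewrite mule1 EFinM.
- by rewrite mulr_ge0 // prod_weight_ge0.
- by move=> x; rewrite lee_fin; case: hp.
Qed.

Lemma E0 (h : 0.-tuple X -> R) : (forall S, 0 <= h S) -> E h = (h [tuple])%:E.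
Proof.
move=> h0; rewrite /E /expect_iid.
have -> : [set: 0.-tuple X] = [set [tuple]].
  by apply/seteqP; split=> t //= _; rewrite [t]tuple0.
rewrite esum_set1 /prod_weight big_ord0 ?mul1e // lee_fin.
exact: h0.
Qed.

Lemma E_const k c : 0 <= c -> E (fun _ : k.-tuple X => c) = c%:E.
Proof.
move=> c0; elim: k => [|k IH]; first by rewrite (E0 (h := fun _ => c)).
by rewrite -IH; exact: (E_behead (h := fun _ : k.-tuple X => c)).
Qed.

Fixpoint dropT (k j : nat) : (j + k).-tuple X -> k.-tuple X :=
  match j return (j + k).-tuple X -> k.-tuple X with
  | 0 => fun S => S
  | j'.+1 => fun S => @dropT k j' (behead_tuple S)
  end.

Lemma val_dropT k j (S : (j + k).-tuple X) : val (dropT S) = drop j S.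
Proof.
elim: j S => [|j IH] S /=; first by rewrite drop0.
by rewrite IH /=; case: (tval S).
Qed.

Lemma E_dropT k j (h : k.-tuple X -> R) : (forall S, 0 <= h S) ->
  E (fun S : (j + k).-tuple X => h (dropT S)) = E h.
Proof.
move=> h0; elim: j => [|j IH] //=.
rewrite -[RHS]IH.
exact: (E_behead (h := fun S : (j + k).-tuple X => h (dropT S))).
Qed.

Lemma E_cast n n' (e : n = n') (H : n'.-tuple X -> R) :
  E (fun S : n.-tuple X => H (tcast e S)) = E H.
Proof. by case: n' / e H => H; apply: eq_esum => S _; rewrite tcast_id. Qed.

Lemma E_marg (H : seq X -> R) z m : (z <= m)%N -> (forall s, 0 <= H s) ->
  E (fun S : z.-tuple X => H S) = E (fun S : m.-tuple X => H (drop (m - z) S)).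
Proof.
move=> le H0; have e : m = (m - z + z)%N by rewrite subnK.
rewrite -(@E_dropT z (m - z)%N (fun S : z.-tuple X => H S)) //.
rewrite -(E_cast e); apply: eq_esum => S _.
by rewrite val_dropT val_tcast.
Qed.

Lemma E_ge0 k (h : k.-tuple X -> R) : (forall S, 0 <= h S) -> (0 <= E h)%E.
Proof.
move=> h0; apply: esum_ge0 => S _.
by rewrite -EFinM lee_fin mulr_ge0 // prod_weight_ge0.
Qed.

Lemma E_le k (g h : k.-tuple X -> R) c : 0 <= c -> (forall S, 0 <= h S) ->
  (forall S, g S <= h S + c) -> (E g <= E h + c%:E)%E.
Proof.
move=> c0 h0 gh.
rewrite -[X in (_ + X)%E](E_const k c0) /E /expect_iid -esumD; last first.
- by move=> S _; rewrite -EFinM lee_fin mulr_ge0 // prod_weight_ge0.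
- by move=> S _; rewrite -EFinM lee_fin mulr_ge0 // prod_weight_ge0.
apply: le_esum => S _; rewrite -!EFinM -EFinD lee_fin -mulrDr.
by rewrite ler_wpM2l // prod_weight_ge0.
Qed.

End Marg.



Section F.
Variables (R : realType) (X : countType) (n m : nat) (f : n.-tuple X -> bool) (x0 : X).
Local Notation gE := (@phi_compose R X n m f).

Definition Fs (s : seq X) : \bar R :=
  ereal_sup [set (gE S')%:E | S' in @complete X m s].

Lemma complete_wit s : (size s <= m)%N -> exists S' : m.-tuple X, @complete X m s S'.
Proof.
move=> le; pose w := s ++ nseq (m - size s) x0.
have sw : size w == m by rewrite size_cat size_nseq subnKC.
exists (insubd [tuple x0 | _ < m] w); exists (nseq (m - size s) x0); split.
  by rewrite size_nseq.
by rewrite insubdK.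
Qed.

Lemma Fs_ge s : (size s <= m)%N -> (0 <= Fs s)%E.
Proof.
move=> /complete_wit [S' HS']; apply: (@le_trans _ _ (gE S')%:E).
  by rewrite lee_fin; exact: gE_ge0.
by apply: ereal_sup_ubound; exists S'.
Qed.

Lemma Fs_le1 s : (Fs s <= 1)%E.
Proof. by apply: ge_ereal_sup => _ [S' _ <-]; rewrite lee_fin; exact: gE_le1. Qed.

Definition RF s := fine (Fs s).

Lemma Fs_fin s : (size s <= m)%N -> Fs s = (RF s)%:E.
Proof.
move=> le; have := Fs_ge le; have := Fs_le1 s; rewrite /RF.
by case: (Fs s).
Qed.

Lemma RF_ge0 s : (size s <= m)%N -> 0 <= RF s.
Proof. by move=> le; have := Fs_ge le; rewrite Fs_fin. Qed.

Lemma RF_le1 s : (size s <= m)%N -> RF s <= 1.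
Proof. by move=> le; have := Fs_le1 s; rewrite Fs_fin. Qed.

Lemma Fs_sub u v : (size u + size v <= m)%N -> (Fs (u ++ v) <= Fs v)%E.
Proof.
move=> le; apply: ge_ereal_sup => _ [S' [T [hT hp]] <-].
apply: ereal_sup_ubound; exists S' => //; exists (u ++ T); split.
  rewrite size_cat hT size_cat; lia.
by rewrite (permPl hp) -catA perm_catCA.
Qed.

Lemma Fs_add u v : (size u + size v <= m)%N ->
  (Fs v <= Fs (u ++ v) + (n%:R * (size u)%:R / m%:R)%:E)%E.
Proof.
move=> le; apply: ge_ereal_sup => _ [S' [T [hT hp]] <-].
set d := size u.
have dT : (d <= size T)%N by rewrite hT; lia.
set T1 := take d T; set T2 := drop d T.
have sT1 : size T1 = d by rewrite size_take_min; lia.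
have sT2 : size T2 = (size T - d)%N by rewrite size_drop.
have sQ : size (T1 ++ v ++ T2) == m.
  by rewrite !size_cat sT1 sT2 hT; apply/eqP; lia.
have sS : size (u ++ v ++ T2) == m.
  by rewrite !size_cat sT2 hT; apply/eqP; lia.
pose Q := insubd S' (T1 ++ v ++ T2).
pose S2 := insubd S' (u ++ v ++ T2).
have vQ : val Q = T1 ++ v ++ T2 by rewrite insubdK.
have vS2 : val S2 = u ++ v ++ T2 by rewrite insubdK.
have e1 : gE S' = gE Q.
  apply: gE_perm; rewrite (permPl hp) vQ -[X in v ++ X](cat_take_drop d T).
  by rewrite perm_catCA.
have e2 : gE Q <= gE S2 + n%:R * d%:R / m%:R.
  apply: gE_pos; first lia.
  move=> i hi; rewrite !(tnth_nth x0) vQ vS2 !nth_cat sT1.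
  by rewrite /d ltnNge hi.
have e3 : ((gE S2)%:E <= Fs (u ++ v))%E.
  apply: ereal_sup_ubound; exists S2 => //; exists T2; split.
    by rewrite sT2 hT size_cat; lia.
  by rewrite vS2 catA.
rewrite e1; apply: (@le_trans _ _ ((gE S2)%:E + (n%:R * d%:R / m%:R)%:E)%E).
  by rewrite -EFinD lee_fin.
by rewrite leeD2r.
Qed.
End F.



Section Binom.
Variables (R : realFieldType) (q e : R).
Hypothesis qe : q + e = 1.

Definition bz (m z : nat) : R := 'C(m, z)%:R * q ^+ z * e ^+ (m - z).

Lemma sum_bz m : \sum_(z < m.+1) bz m z = 1.
Proof.
have := exprDn e q m; rewrite addrC qe expr1n => ->.
by apply: eq_bigr => z _; rewrite /bz -mulr_natl; ring.
Qed.

Lemma bz_shift m' (g : nat -> R) :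
  \sum_(z < m'.+2) bz m'.+1 z * (z%:R * g z) =
  m'.+1%:R * q * \sum_(z < m'.+1) bz m' z * g z.+1.
Proof.
rewrite big_ord_recl /= mul0r mulr0 add0r mulr_sumr; apply: eq_bigr => z _.
rewrite /bz /bump /= add1n subSS.
have h := mul_bin_diag m'.+1 z; rewrite /= in h.
have hR : (m'.+1%:R * 'C(m', z)%:R : R) = z.+1%:R * 'C(m'.+1, z.+1)%:R.
  by rewrite -!natrM h.
rewrite exprS.
transitivity ((z.+1%:R * 'C(m'.+1, z.+1)%:R) * q * q ^+ z * e ^+ (m' - z) * g z.+1).
  by ring.
by rewrite -hR; ring.
Qed.

Lemma sum_bz_z m : \sum_(z < m.+1) bz m z * z%:R = m%:R * q.
Proof.
case: m => [|m']; first by rewrite big_ord1 mulr0 mul0r.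
rewrite (eq_bigr (fun z : 'I_m'.+2 => bz m'.+1 z * (z%:R * 1))); last first.
  by move=> z _; rewrite mulr1.
have H := bz_shift m' (fun _ => 1); cbv beta in H; rewrite H.
rewrite (eq_bigr (fun z : 'I_m'.+1 => bz m' z)).
  by rewrite sum_bz mulr1.
by move=> z _; rewrite mulr1.
Qed.

Lemma sum_bz_z2 m : \sum_(z < m.+1) bz m z * z%:R ^+ 2 =
  m%:R * q * ((m%:R - 1) * q + 1).
Proof.
case: m => [|m']; first by rewrite big_ord1 !mul0r expr0n /= mulr0.
rewrite (eq_bigr (fun z : 'I_m'.+2 => bz m'.+1 z * (z%:R * z%:R))); last first.
  by move=> z _; rewrite expr2.
have H := bz_shift m' (fun z => z%:R); cbv beta in H; rewrite H; congr (_ * _).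
rewrite (eq_bigr (fun z : 'I_m'.+1 => bz m' z * z%:R + bz m' z)); last first.
  by move=> z _; rewrite -natr1 mulrDr mulr1.
rewrite big_split /= sum_bz_z sum_bz.
by rewrite -natr1 addrK.
Qed.

Lemma sum_bz_sq m (k0 : R) :
  \sum_(z < m.+1) bz m z * (k0 - z%:R) ^+ 2 = (k0 - m%:R * q) ^+ 2 + m%:R * q * e.
Proof.
rewrite (eq_bigr (fun z : 'I_m.+1 => k0 ^+ 2 * bz m z + (- (2 * k0)) * (bz m z * z%:R)
   + bz m z * z%:R ^+ 2)); last by move=> z _; ring.
rewrite !big_split /= -!mulr_sumr sum_bz sum_bz_z sum_bz_z2.
have -> : e = 1 - q by rewrite -qe addrC addKr.
ring.
Qed.

Lemma bz_ge0 m z : 0 <= q -> 0 <= e -> 0 <= bz m z.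
Proof. by move=> hq he; rewrite /bz !mulr_ge0 // exprn_ge0. Qed.

Lemma binom_bound m n (eps k0 : R) : 0 <= q -> 0 <= e -> 0 < eps ->
  (k0 - m%:R * q) ^+ 2 <= 1 -> 2 * n%:R ^+ 2 <= eps ^+ 2 * m%:R ->
  \sum_(z < m.+1) bz m z * (n%:R * `|k0 - z%:R| / m%:R) <= eps.
Proof.
move=> hq he heps hk hm.
case: (posnP n) => [->|npos].
  rewrite big1 ?ltW // => z _; by rewrite mul0r mul0r mulr0.
have nR : (0 : R) < n%:R by rewrite ltr0n.
have n2 : (1 : R) <= n%:R ^+ 2.
  by rewrite -natrX ler1n expn_gt0 npos.
have mR : (0 : R) < m%:R.
  have h2 : 0 < eps ^+ 2 * m%:R by lra.
  by rewrite (pmulr_rgt0 _ (exprn_gt0 2 heps)) in h2.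
have m1 : (1 : R) <= m%:R.
  by rewrite ler1n -(ltr0n R).
set t := eps * m%:R / n%:R.
have tpos : 0 < t by rewrite /t divr_gt0 // mulr_gt0.
have habs z : `|k0 - z%:R| <= ((k0 - z%:R) ^+ 2 + t ^+ 2) / (2 * t).
  rewrite ler_pdivlMr; last by rewrite mulr_gt0.
  have := sqr_ge0 (`|k0 - z%:R| - t); rewrite -[(k0 - z%:R) ^+ 2](real_normK (num_real _)).
  by nra.
have step1 : \sum_(z < m.+1) bz m z * (n%:R * `|k0 - z%:R| / m%:R) <=
   n%:R / m%:R * (((k0 - m%:R * q) ^+ 2 + m%:R * q * e + t ^+ 2) / (2 * t)).
  rewrite -sum_bz_sq.
  rewrite (eq_bigr (fun z : 'I_m.+1 => n%:R / m%:R * (bz m z * `|k0 - z%:R|))); last first.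
    by move=> z _; ring.
  rewrite -mulr_sumr ler_wpM2l ?divr_ge0 //.
  have -> : t ^+ 2 = \sum_(z < m.+1) bz m z * t ^+ 2 by rewrite -mulr_suml sum_bz mul1r.
  rewrite -big_split /= mulr_suml.
  apply: ler_sum => z _.
  by rewrite -mulrDr -mulrA ler_wpM2l ?bz_ge0.
apply: le_trans step1 _.
have qe4 : q * e <= 1 / 4.
  have := sqr_ge0 (q - e); have : (q + e) ^+ 2 = 1 by rewrite qe expr1n.
  nra.
have hV : (k0 - m%:R * q) ^+ 2 + m%:R * q * e <= 1 + m%:R / 4.
  have : m%:R * (q * e) <= m%:R * (1 / 4) by rewrite ler_wpM2l // ltW.
  lra.
set V := (k0 - m%:R * q) ^+ 2 + m%:R * q * e in hV *.
have Vt : n%:R / m%:R * ((V + t ^+ 2) / (2 * t)) = n%:R ^+ 2 * V / (2 * eps * m%:R ^+ 2) + eps / 2.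
  rewrite /t; field; rewrite !gt_eqF //.
rewrite Vt.
suff : n%:R ^+ 2 * V / (2 * eps * m%:R ^+ 2) <= eps / 2 by lra.
rewrite ler_pdivrMr ?mulr_gt0 ?exprn_gt0 //.
have : n%:R ^+ 2 * V <= n%:R ^+ 2 * (1 + m%:R / 4).
  by rewrite ler_wpM2l // exprn_ge0 // ltW.
nra.
Qed.
End Binom.



Lemma clean_facts (R : realType) (eta : R) m : 0 < eta < 1 ->
  [/\ (n_clean eta m + n_added eta m = m)%N, (n_clean eta m <= m)%N &
      ((n_clean eta m)%:R - m%:R * (1 - eta)) ^+ 2 <= 1].
Proof.
case/andP => e0 e1.
set x := (1 - eta) * m%:R.
have x0 : 0 <= x by rewrite /x mulr_ge0 // subr_ge0 ltW.
set c := Num.ceil x.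
have c0 : (0 <= c)%R by rewrite /c ceil_ge0; lra.
have := ceil_itv x; rewrite -/c => /andP[cl cu].
set y := eta * m%:R.
have y0 : 0 <= y by rewrite /y mulr_ge0 // ltW.
set g := Num.floor y.
have g0 : (0 <= g)%R by rewrite /g floor_ge0.
have := floor_itv y; rewrite -/g => /andP[gl gu].
have hcg : c + g = m%:Z.
  have h1 : ((c + g)%:~R : R) < (m%:Z + 1)%:~R.
    rewrite !intrD; move: cl gl; rewrite intrD /x /y; lra.
  have h2 : ((m%:Z - 1)%:~R : R) < (c + g)%:~R.
    rewrite !intrD; move: cu gu; rewrite !intrD /x /y; lra.
  rewrite ltr_int in h1; rewrite ltr_int in h2; lia.
have nc : (n_clean eta m)%:R = c%:~R :> R.
  by rewrite /n_clean -/x -/c -[c]gez0_abs // pmulrn.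
have na : n_added eta m = `|g|%N.
  by rewrite /n_added -/y truncn_floor y0.
have ncZ : (n_clean eta m)%:Z = c by rewrite /n_clean -/x -/c gez0_abs.
split.
- rewrite na; lia.
- lia.
- rewrite nc; move: cu cl; rewrite intrD /x => h3 h4.
  have : 0 <= c%:~R - m%:R * (1 - eta) :> R by lra.
  have : c%:~R - m%:R * (1 - eta) <= 1 :> R by lra.
  nra.
Qed.



Section Comb.
Variables (R : realType) (X : countType) (n m : nat) (f : n.-tuple X -> bool)
  (x0 : X) (p : X -> R).
Hypothesis hp : is_distribution p.
Local Notation RFf := (@RF R X n m f).

Lemma RF_ge0_all s : 0 <= RFf s.
Proof.
case: (leqP (size s) m) => [le|gt]; first by have := RF_ge0 R f x0 le.
rewrite /RF /Fs.
have -> : [set (phi_compose R f S')%:E | S' in @complete X m s] = set0.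
  apply/seteqP; split => [y [S' [T [hT hp']] _]|//].
  by move/perm_size: hp'; rewrite size_tuple size_cat => e; move: (leq_addr (size T) (size s)); rewrite -e leqNgt gt.
by rewrite (ereal_sup0 R).
Qed.

Lemma RF_le1_all s : RFf s <= 1.
Proof. by have := Fs_le1 R m f s; rewrite /RF; case: (Fs R m f s) => //= r; rewrite lee_fin. Qed.

Definition ER z := fine (E p (fun S : z.-tuple X => RFf S)).

Lemma ER_fin z : E p (fun S : z.-tuple X => RFf S) = (ER z)%:E.
Proof.
have h0 := E_ge0 hp (fun S : z.-tuple X => RF_ge0_all S).
have h1 : (E p (fun S : z.-tuple X => RFf S) <= 1%:E)%E.
  have := @E_le _ _ _ hp z (fun S => RFf S) (fun _ => 0) 1 ler01 (fun _ => lexx 0).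
  rewrite E_const // add0e; apply => S; rewrite add0r; exact: RF_le1_all.
by rewrite /ER; move: h0 h1; case: (E _ _).
Qed.

Lemma ER_diff a b : (a <= b)%N -> (b <= m)%N ->
  ER a <= ER b + n%:R * (b - a)%:R / m%:R /\ ER b <= ER a.
Proof.
move=> ab bm.
have cge0 : 0 <= n%:R * (b - a)%:R / m%:R :> R by rewrite divr_ge0 // mulr_ge0.
have Ea := E_marg hp (H := RFf) (leq_trans ab bm) RF_ge0_all.
have Eb := E_marg hp (H := RFf) bm RF_ge0_all.
have key (S : m.-tuple X) :
  RFf (drop (m - a) S) <= RFf (drop (m - b) S) + n%:R * (b - a)%:R / m%:R /\
  RFf (drop (m - b) S) <= RFf (drop (m - a) S) + 0.
  set u := take (b - a) (drop (m - b) S); set v := drop (m - a) S.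
  have euv : drop (m - b) S = u ++ v.
    by rewrite -[LHS](cat_take_drop (b - a)) drop_drop; congr (_ ++ drop _ _); lia.
  have su : size u = (b - a)%N by rewrite size_take size_drop size_tuple; case: ifP; lia.
  have sv : size v = a by rewrite size_drop size_tuple; lia.
  have suv : (size u + size v <= m)%N by rewrite su sv; lia.
  have suv' : (size (u ++ v) <= m)%N by rewrite size_cat.
  have sv' : (size v <= m)%N by lia.
  rewrite euv addr0; split.
    have := Fs_add R f x0 suv; rewrite (Fs_fin R f x0 sv') (Fs_fin R f x0 suv') su.
    by rewrite -EFinD lee_fin.
  by have := Fs_sub R f suv; rewrite (Fs_fin R f x0 sv') (Fs_fin R f x0 suv') lee_fin.
have H1 := @E_le _ _ _ hp m (fun S => RFf (drop (m - a) S)) (fun S => RFf (drop (m - b) S))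
  _ cge0 (fun S => RF_ge0_all _) (fun S => (key S).1).
have H2 := @E_le _ _ _ hp m (fun S => RFf (drop (m - b) S)) (fun S => RFf (drop (m - a) S))
  _ (lexx 0) (fun S => RF_ge0_all _) (fun S => (key S).2).
rewrite -Ea -Eb !ER_fin in H1 H2.
by rewrite -EFinD lee_fin in H1; rewrite -EFinD lee_fin addr0 in H2.
Qed.
End Comb.



Theorem mainTheorem18 (R : realType) :
  exists C : R, 0 < C /\
  forall (X : countType) (n : nat) (f : n.-tuple X -> bool) (eps eta : R)
         (p : X -> R) (m : nat),
    0 < eps < 1 -> 0 < eta < 1 -> is_distribution p ->
    C * (n%:R ^+ 2) / (eps ^+ 2) <= m%:R ->
    (`| AdaptiveAddMax eta (@phi_compose R X n m f) p
        - BinomialMax eta (@phi_compose R X n m f) p | <= eps%:E)%E.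
Proof.
exists 2; split => // X n f eps eta p m /andP[e0 e1] heta hp hm.
have [x0 _] : exists x : X, True.
  case: (pselect (exists x : X, True)) => // hno; exfalso.
  have eT : [set: X] = set0 by apply/seteqP; split => // x _; apply: hno; exists x.
  by case: hp => _; rewrite eT esum_set0 => /eqP; rewrite eq_sym eqe oner_eq0.
have h0 : 0 < eta by case/andP: heta.
have h1 : eta < 1 by case/andP: heta.
case: (clean_facts m heta) => hsum hk0 hsq.
set k0 := n_clean eta m in hsum hk0 hsq.
have qe : (1 - eta) + eta = 1 by rewrite subrK.
have HA : AdaptiveAddMax eta (@phi_compose R X n m f) p = (ER m f p k0)%:E.
  rewrite /AdaptiveAddMax -(ER_fin m f x0 hp) /E; apply: eq_esum => S _.
  congr (_ * _)%E; rewrite -(Fs_fin R f x0 (s := S)); last by rewrite size_tuple.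
  rewrite /Fs /add_pts /complete size_tuple.
  by have -> : (m - k0)%N = n_added eta m by lia.
have HB : BinomialMax eta (@phi_compose R X n m f) p =
    (\sum_(z < m.+1) bz (1 - eta) eta m z * ER m f p z)%:E.
  rewrite /BinomialMax -sumEFin; apply: eq_bigr => z _.
  rewrite [RHS]EFinM; congr (_ * _)%E.
  rewrite -(ER_fin m f x0 hp) /E; apply: eq_esum => S _.
  congr (_ * _)%E; rewrite -(Fs_fin R f x0 (s := S)) // size_tuple.
  by rewrite -ltnS.
rewrite HA HB -EFinB abse_EFin lee_fin.
have -> : ER m f p k0 = \sum_(z < m.+1) bz (1 - eta) eta m z * ER m f p k0.
  by rewrite -mulr_suml sum_bz // mul1r.
rewrite -sumrB; apply: le_trans (ler_norm_sum _ _ _) _.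
have q0 : 0 <= 1 - eta by rewrite subr_ge0 ltW.
have e0' : 0 <= eta by rewrite ltW.
have hm' : 2 * n%:R ^+ 2 <= eps ^+ 2 * m%:R.
  by move: hm; rewrite ler_pdivrMr ?exprn_gt0 // [_ * eps ^+ 2]mulrC.
apply: le_trans (binom_bound qe q0 e0' e0 hsq hm').
apply: ler_sum => z _.
rewrite -mulrBr normrM ger0_norm ?bz_ge0 // ler_wpM2l ?bz_ge0 //.
have zm : (z <= m)%N by rewrite -ltnS.
case: (leqP k0 z) => hz.
  case: (ER_diff f x0 hp hz zm) => H1 H2.
  rewrite natrB // in H1.
  rewrite ger0_norm ?subr_ge0 // [`|k0%:R - _|]distrC ger0_norm ?subr_ge0 ?ler_nat //.
  lra.
have hz' := ltnW hz.
case: (ER_diff f x0 hp hz' hk0) => H1 H2.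
rewrite natrB // in H1.
rewrite distrC ger0_norm ?subr_ge0 // [`|k0%:R - _|]ger0_norm ?subr_ge0 ?ler_nat //.
lra.
Qed.
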